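(* Consider an exponential bottleneck game on a graph $G$, a Nash-routing $\mathbf{p}=[p_1,\dots,p_N]$ and a routing $\mathbf{p}^*=[p_1^*,\dots,p_N^*]$ of minimum social cost, and suppose $C^*=C(\mathbf{p}^* )=1$ and $L^*\ge2$. Let $\hat C=\lceil\max_i\log_2\widetilde C_i(\mathbf{p})\rceil$, $l_1^*=\log_2(L^*-1)$ and $k=\hat C-l_1^*-11$. Then every non-empty set of players $S\subseteq S^{(1)}\cup S^{(2)}\cup\dots\cup S^{(k)}$ is not self-sufficient in $\mathbf{p}$.
   Context: Player $\pi_i$ has a strategy set $\mathcal{P}_i$ of paths from $u_i$ to $v_i$; a routing is $\mathbf{p}=[p_1,\dots,p_N]$ with $p_i\in\mathcal{P}_i$. $C_e(\mathbf{p})$ is the number of paths in $\mathbf{p}$ using edge $e$; social cost $C(\mathbf{p})=\max_eC_e(\mathbf{p})$; player cost $\widetilde C_i(\mathbf{p})=\sum_{e\in p_i}2^{C_e(\mathbf{p})}$. A Nash-routing is one in which no player can strictly lower its cost by unilaterally switching to another path in its strategy set. $L^*$ is the maximum length of a path in $\mathbf{p}^*$. Stage $i$ ($1\le i\le\hat C$): $S^{(i)}$ is the set of players $\pi_j$ with $2^{\hat C-i}+2\le\widetilde C_j(\mathbf{p})\le 2^{\hat C-i+1}$. Self-sufficiency: for a set $S$ of players and $\pi_j\in S$, let $\mathbf{q}_j$ be the routing consisting only of the players in $S$, where every player of $S$ other than $\pi_j$ uses its path from $\mathbf{p}$ and $\pi_j$ uses $p_j^*$ (congestions in $\mathbf{q}_j$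 count only these paths). $S$ is self-sufficient in $\mathbf{p}$ if for every $\pi_j\in S$, $\sum_{e\in p_j^*}2^{C_e(\mathbf{q}_j)}\ge\widetilde C_j(\mathbf{p})$. *)

(* Defs.v *)
From Stdlib Require Import Reals.
From mathcomp Require Import all_boot.
Set Implicit Arguments. Unset Strict Implicit. Unset Printing Implicit Defensive.

Section Bottleneck.
Variables (V E : finType) (src dst : E -> V).

Fixpoint walk (u v : V) (s : seq E) : bool :=
  match s with
  | [::] => u == v
  | e :: s' => (src e == u) && walk (dst e) v s'
  end.

Definition is_path (u v : V) (s : seq E) : bool := walk u v s && uniq s.

Variable N : nat.
Definition routing := 'I_N -> seq E.

Definition cong (r : routing) (e : E) : nat := #|[set i | e \in r i]|.

Definition social_cost (r : routing) : nat := \max_(e : E) cong r e.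

Definition pcost (r : routing) (i : 'I_N) : nat := \sum_(e <- r i) 2 ^ cong r e.

Definition deviate (r : routing) (i : 'I_N) (q : seq E) : routing :=
  fun j => if j == i then q else r j.

Definition valid (P : 'I_N -> seq E -> Prop) (r : routing) : Prop :=
  forall i, P i (r i).

Definition nash (P : 'I_N -> seq E -> Prop) (r : routing) : Prop :=
  valid P r /\ forall i q, P i q -> ~ (pcost (deviate r i q) i < pcost r i).

Definition optimal (P : 'I_N -> seq E -> Prop) (r : routing) : Prop :=
  valid P r /\ forall r', valid P r' -> social_cost r <= social_cost r'.

Definition Lmax (r : routing) : nat := \max_(i : 'I_N) size (r i).

(* hat C = ceil(max_i log2 ~C_i(p)) : smallest c with max_i ~C_i(p) <= 2^c *)
Definition Chat (r : routing) : nat := up_log 2 (\max_(i : 'I_N) pcost r i).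

Definition stage (r : routing) (i : nat) : {set 'I_N} :=
  [set j | (2 ^ (Chat r - i) + 2 <= pcost r j) && (pcost r j <= 2 ^ (Chat r - i + 1))].

Definition cong_q (r rs : routing) (S : {set 'I_N}) (j : 'I_N) (e : E) : nat :=
  #|[set i in S | e \in (if i == j then rs j else r i)]|.

Definition self_sufficient (r rs : routing) (S : {set 'I_N}) : Prop :=
  forall j, j \in S -> pcost r j <= \sum_(e <- rs j) 2 ^ cong_q r rs S j e.

End Bottleneck.

Definition log2R (x : R) : R := Rdiv (ln x) (ln (IZR 2)).
Definition kR (chat L : nat) : R :=
  Rminus (Rminus (INR chat) (log2R (INR (L - 1)))) (IZR 11).

(* Main.v *)
Require Import Defs.
From Stdlib Require Import Reals Lra.
From mathcomp Require Import all_boot zify.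

Section RP.
Local Open Scope R_scope.
Lemma INR_expn2 d : INR ((2 ^ d)%N) = 2 ^ d.
Proof.
elim: d => [|d IH] //=. by rewrite expnS mult_INR IH.
Qed.

Lemma real_part (c i L : nat) : (2 <= L)%N -> Rle (INR i) (kR c L) ->
  (2^11 * (L-1) <= 2^(c - i))%N.
Proof.
move=> HL H; rewrite /kR /log2R in H.
have Ha : (1 <= INR ((L - 1)%N)) by replace 1 with (INR 1) by reflexivity; apply le_INR; apply/leP; lia.
have ln2 : (0 < ln (IZR 2)) by have := ln_lt_2; lra.
have lna : (0 <= ln (INR ((L - 1)%N))).
  case: (Rle_lt_or_eq_dec _ _ Ha) => h; last by rewrite -h ln_1; lra.
  by have := ln_increasing 1 _ Rlt_0_1 h; rewrite ln_1; lra.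
have lq : (0 <= ln (INR ((L - 1)%N)) / ln (IZR 2)).
  by apply: Rmult_le_pos => //; apply: Rlt_le; apply: Rinv_0_lt_compat.
have Hci : (i + 11 <= c)%N.
  apply/leP; apply: INR_le; rewrite plus_INR; simpl INR. lra.
set d := (c - i - 11)%N.
have Hd : INR d = (INR c - INR i - 11).
  rewrite /d !minus_INR; try (apply/leP; lia). simpl INR. lra.
have H1 : (ln (INR ((L - 1)%N)) <= INR d * ln (IZR 2)).
  have := Rmult_le_compat_r (ln (IZR 2)) _ _ (Rlt_le _ _ ln2) (Rle_trans _ _ _ H (Rle_refl _)).
  rewrite Hd. move: H. rewrite /Rdiv. move=> H h.
  have e : (ln (INR ((L - 1)%N)) * / ln (IZR 2) * ln (IZR 2) = ln (INR ((L-1)%N))) by field; lra.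
  nra.
have H2 : (INR ((L - 1)%N) <= INR ((2 ^ d)%N)).
  rewrite INR_expn2. apply: Rnot_lt_le => h.
  have := ln_increasing _ _ (pow_lt _ d Rlt_0_2) h.
  rewrite ln_pow; last lra. simpl INR. lra.
have H3 : (L - 1 <= 2 ^ d)%N by apply/leP; apply: INR_le.
have -> : (c - i = 11 + d)%N by rewrite /d; lia.
by rewrite expnD leq_mul2l H3 orbT.
Qed.
End RP.

Lemma sum_ind (I : finType) (A : pred I) : \sum_(i : I) (i \in A : nat) = #|A|.
Proof.
rewrite -sum1_card [RHS]big_mkcond /=; apply: eq_bigr => i _; by case: (i \in A).
Qed.

Lemma sum_ind_in (I : finType) (A : {set I}) (Q : pred I) :
  \sum_(i in A) (Q i : nat) = #|[set i in A | Q i]|.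
Proof.
rewrite -sum_ind big_mkcond /=; apply: eq_bigr => i _; rewrite inE; by case: (i \in A).
Qed.

Lemma swap_sum (E : finType) (N : nat) (S : {set 'I_N}) (r : 'I_N -> seq E) (f : E -> nat) :
  (forall j, uniq (r j)) ->
  \sum_(j in S) \sum_(e <- r j) f e = \sum_(e : E) #|[set i in S | e \in r i]| * f e.
Proof.
move=> Hu.
under eq_bigr => j _ do rewrite big_uniq // big_mkcond /=.
rewrite exchange_big /=; apply: eq_bigr => e _.
rewrite -sum_ind_in big_distrl /=; apply: eq_bigr => j _.
by case: (e \in r j); rewrite ?mul1n ?mul0n.
Qed.

Lemma pointwise m n : (m <= 1)%N -> (3 * (m * 2 ^ (n + 1)) <= 24 * m + 2 * (n * 2 ^ n))%N.
Proof.
case: m => [|[|m]] // _.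
rewrite expnD expn1.
case: n => [|[|[|n]]] //.
set x := 2 ^ n.+3. have : (0 < x)%N by rewrite expn_gt0.
nia.
Qed.

Theorem theorem2 (V E : finType) (src dst : E -> V) (N : nat)
  (u v : 'I_N -> V) (P : 'I_N -> seq E -> Prop)
  (HP : forall i q, P i q -> is_path src dst (u i) (v i) q)
  (p pstar : routing E N)
  (Hnash : nash P p) (Hopt : optimal P pstar)
  (HC1 : social_cost pstar = 1%N) (HL : (2 <= Lmax pstar)%N) :
  forall S : {set 'I_N},
    S != set0 ->
    (forall j, j \in S -> exists i : nat,
        (1 <= i)%N /\ Rle (INR i) (kR (Chat p) (Lmax pstar)) /\ j \in stage p i) ->
    ~ self_sufficient p pstar S.
Proof.
move=> S HS0 Hst Hss.
have Hu : forall j, uniq (p j).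
  by move=> j; case/andP: (HP _ _ (Hnash.1 j)).
have Hus : forall j, uniq (pstar j).
  by move=> j; case/andP: (HP _ _ (Hopt.1 j)).
set L := Lmax pstar.
set n := fun e => #|[set i in S | e \in p i]|.
set m := fun e => #|[set i in S | e \in pstar i]|.
set T := \sum_(j in S) pcost p j.
have HA : (#|S| * (2048 * (L - 1) + 2) <= T)%N.
  rewrite -sum_nat_const; apply: leq_sum => j jS.
  have [i [_ [Hi]]] := Hst j jS.
  rewrite inE => /andP[H1 _].
  have := @real_part _ _ _ HL Hi. rewrite -/L. move: H1. lia.
have HB : (T <= \sum_(e : E) m e * 2 ^ (n e + 1))%N.
  apply: (@leq_trans (\sum_(j in S) \sum_(e <- pstar j) 2 ^ (n e + 1))).
    apply: leq_sum => j jS; apply: leq_trans (Hss j jS) _.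
    apply: leq_sum => e _; apply: leq_pexp2l => //.
    rewrite /cong_q.
    have sub : [set i in S | e \in (if i == j then pstar j else p i)] \subset j |: [set i in S | e \in p i].
      apply/subsetP => i; rewrite !inE; case: (i == j) => //=.
    apply: leq_trans (subset_leq_card sub) _.
    by rewrite cardsU1 addnC leq_add2l leq_b1.
  by rewrite swap_sum.
have HC : forall e, (m e <= 1)%N.
  move=> e; rewrite -HC1; apply: (@leq_trans (cong pstar e)); last exact: (@leq_bigmax _ (fun e => cong pstar e) e).
  apply: subset_leq_card; apply/subsetP => i; rewrite !inE => /andP[_ ->] //.
have HD : (\sum_(e : E) n e * 2 ^ (n e) <= T)%N.
  rewrite /T /pcost -swap_sum //; apply: leq_sum => j _; apply: leq_sum => e _.
  apply: leq_pexp2l => //; apply: subset_leq_card; apply/subsetP => i; rewrite !inE => /andP[_ ->] //.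
have HE : (\sum_(e : E) m e <= #|S| * L)%N.
  have -> : \sum_(e : E) m e = \sum_(j in S) \sum_(e <- pstar j) 1.
    by rewrite swap_sum //; apply: eq_bigr => e _; rewrite muln1.
  rewrite -sum_nat_const; apply: leq_sum => j _.
  rewrite sum1_size.
  exact: (@leq_bigmax _ (fun i => size (pstar i)) j).
have HF : (3 * \sum_(e : E) m e * 2 ^ (n e + 1) <= 24 * \sum_(e : E) m e + 2 * \sum_(e : E) n e * 2 ^ (n e))%N.
  rewrite !big_distrr -big_split /=; apply: leq_sum => e _; exact: pointwise.
have HS : (0 < #|S|)%N by rewrite card_gt0.
move: HA HB HD HE HF HS HL.
set a := \sum_(e : E) m e * 2 ^ (n e + 1).
set b := \sum_(e : E) n e * 2 ^ (n e).
set c := \sum_(e : E) m e.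
set s := #|S|.
nia.
Qed.
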